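(* Let $(\rho_t)_{t\ge0}$ be a gradient flow solution of the Granular-Medium equation. For any $x,y\in\mathbb{T}^d$ and $t,h>0$, with $B=|\nabla V|_2+|\nabla W|_2$, \[D_\rho(x,y;t,h)\le\left(\frac{d(x,y)}{2\sqrt h}+\frac12\sqrt h\,B\right)^2.\]
   Context: $\mathbb{T}^d=\mathbb{R}^d/\mathbb{Z}^d$ with flat distance $d(x,y)$. $V,W\in C^{2,1}(\mathbb{T}^d)$; for a vector field $U$, $|U|_2=\sup_x|U(x)|$ (Euclidean norm). $W*\rho(x)=\int W(x-y)d\rho(y)$. The Granular-Medium equation is $\partial_t\rho_t=\Delta\rho_t+\nabla\cdot(\rho_t\nabla V+\rho_t\nabla W*\rho_t)$, and gradient flow solutions are Ambrosio–Gigli–Savaré gradient flows of $\mathcal{F}[\rho]=\int\rho\log\rho+\int Vd\rho+\int W*\rho\,d\rho$ in $(\mathcal{P}(\mathbb{T}^d),W_2)$. Lagrangian: $\mathcal{L}_\rho(p,x,t)=\frac14|p+\nabla V(x)+\nabla W*\rho_t(x)|^2$; cost $D_\rho(x,y;t,h)=\inf\{\int_t^{t+h}\mathcal{L}_\rho(\dot\gamma_s,\gamma_s,s)ds:\gamma\in AC_2([t,t+h];\mathbb{T}^d),\gamma_t=x,\gamma_{t+h}=y\}$. *)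

(* Defs.v *)
From HB Require Import structures.
From mathcomp Require Import all_boot all_order all_algebra.
From mathcomp Require Import all_classical all_reals all_analysis.
Set Implicit Arguments. Unset Strict Implicit. Unset Printing Implicit Defensive.
Import Order.TTheory GRing.Theory Num.Theory.
Import numFieldNormedType.Exports.
Local Open Scope classical_set_scope.
Local Open Scope ring_scope.

(* Points of R^d are row vectors 'rV[R]_d; the torus T^d = R^d / Z^d is
   represented through Z^d-periodic objects on R^d. *)

Definition enorm {R : realType} {d : nat} (v : 'rV[R]_d) : R :=
  Num.sqrt (\sum_(i < d) v ord0 i ^+ 2).

Definition int_vec {R : realType} {d : nat} (k : 'rV[R]_d) : Prop :=
  forall i : 'I_d, k ord0 i \is a Num.int.

Definition torus_dist {R : realType} {d : nat} (x y : 'rV[R]_d) : R :=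
  inf [set enorm (x - y - k) | k in [set k : 'rV[R]_d | int_vec k]].

Definition zperiodic {R : realType} {d : nat} (f : 'rV[R]_d -> R) : Prop :=
  forall x k, int_vec k -> f (x + k) = f x.

Definition ev {R : realType} {d : nat} (i : 'I_d) : 'rV[R]_d := delta_mx ord0 i.

Definition pder {R : realType} {d : nat} (i : 'I_d) (f : 'rV[R]_d -> R)
  : 'rV[R]_d -> R := fun x => 'D_(ev i) f x.

Definition grad {R : realType} {d : nat} (f : 'rV[R]_d -> R) (x : 'rV[R]_d)
  : 'rV[R]_d := \row_i pder i f x.

Definition C21 {R : realType} {d : nat} (f : 'rV[R]_d -> R) : Prop :=
  (forall x, differentiable f x) /\
  (forall (i : 'I_d) x, differentiable (pder i f) x) /\
  (forall i j : 'I_d, exists L : R, forall x y,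
      `| pder j (pder i f) x - pder j (pder i f) y | <= L * enorm (x - y)).

Definition supnorm {R : realType} {d : nat} (U : 'rV[R]_d -> 'rV[R]_d) : R :=
  sup (range (fun x => enorm (U x))).

(* the measurable space of R^d used for measures: d.-tuple R with the
   product (coordinate) sigma-algebra *)
Definition tup2rv {R : realType} {d : nat} (y : d.-tuple R) : 'rV[R]_d :=
  \row_i tnth y i.

Definition conv_grad {R : realType} {d : nat} (W : 'rV[R]_d -> R)
  (rho : probability (d.-tuple R) R) (x : 'rV[R]_d) : 'rV[R]_d :=
  \row_i Rintegral rho setT (fun y => pder i W (x - tup2rv y)).

Definition lagr {R : realType} {d : nat} (V W : 'rV[R]_d -> R)
  (rho : R -> probability (d.-tuple R) R) (p x : 'rV[R]_d) (s : R) : R :=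
  4^-1 * enorm (p + grad V x + conv_grad W (rho s) x) ^+ 2.

Definition AC2_with_deriv {R : realType} {d : nat} (t h : R)
  (gamma g : R -> 'rV[R]_d) : Prop :=
  forall i : 'I_d,
    (@lebesgue_measure R).-integrable `[t, t + h] (fun s => (g s ord0 i)%:E) /\
    (@lebesgue_measure R).-integrable `[t, t + h] (fun s => (g s ord0 i ^+ 2)%:E) /\
    (forall s, t <= s <= t + h ->
       gamma s ord0 i = gamma t ord0 i +
         Rintegral (@lebesgue_measure R) `[t, s] (fun r => g r ord0 i)).

(* cost D_rho(x, y; t, h): infimum of the action over AC_2 curves in T^d
   from [x] to [y] (lifted to R^d: gamma t = x, gamma (t+h) = y mod Z^d) *)
Definition cost {R : realType} {d : nat} (V W : 'rV[R]_d -> R)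
  (rho : R -> probability (d.-tuple R) R) (x y : 'rV[R]_d) (t h : R) : \bar R :=
  ereal_inf [set a : \bar R | exists (gamma g : R -> 'rV[R]_d),
     [/\ AC2_with_deriv t h gamma g, gamma t = x, int_vec (gamma (t + h) - y) &
        a = (\int[@lebesgue_measure R]_(s in `[t, (t + h)%R])
               (lagr V W rho (g s) (gamma s) s)%:E)%E]].

(* Main.v *)
Require Import Defs.
From HB Require Import structures.
From mathcomp Require Import all_boot all_order all_algebra.
From mathcomp Require Import all_classical all_reals all_analysis.
From mathcomp Require Import ring lra.
Import Order.TTheory GRing.Theory Num.Theory.
Import numFieldNormedType.Exports.
Local Open Scope classical_set_scope.
Local Open Scope ring_scope.

Section Alg.
Context {R : realType} {d : nat}.
Implicit Types a b : 'rV[R]_d.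

Definition sqn a : R := \sum_(i < d) a ord0 i ^+ 2.
Definition dotp a b : R := \sum_(i < d) a ord0 i * b ord0 i.

Lemma sqn_ge0 a : 0 <= sqn a.
Proof. by apply: sumr_ge0 => i _; exact: sqr_ge0. Qed.

Lemma enormE a : enorm a = Num.sqrt (sqn a).
Proof. by []. Qed.

Lemma enorm_ge0 a : 0 <= enorm a.
Proof. exact: sqrtr_ge0. Qed.

Lemma enorm_sqr a : enorm a ^+ 2 = sqn a.
Proof. by rewrite enormE sqr_sqrtr // sqn_ge0. Qed.

Lemma dot_t a b t : 0 < t -> 2 * dotp a b <= t * sqn a + t^-1 * sqn b.
Proof.
move=> t0; rewrite /dotp /sqn mulr_sumr !mulr_sumr -big_split /=.
apply: ler_sum => i _.
set x := a ord0 i; set y := b ord0 i.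
have h : 2 * (x * y) * t <= (t * x ^+ 2 + t^-1 * y ^+ 2) * t.
  have -> : (t * x ^+ 2 + t^-1 * y ^+ 2) * t = t * t * x ^+ 2 + y ^+ 2.
    by field; rewrite gt_eqF.
  have := sqr_ge0 (t * x - y); nra.
by rewrite -(ler_pM2r t0).
Qed.

Lemma sqn_eq0 a : sqn a = 0 -> forall i, a ord0 i = 0.
Proof.
move=> h i; have := @psumr_eq0P _ _ predT (fun i => a ord0 i ^+ 2).
move=> /(_ (fun i _ => sqr_ge0 _) h i isT) /eqP.
by rewrite sqrf_eq0 => /eqP.
Qed.

Lemma CS a b : dotp a b <= enorm a * enorm b.
Proof.
have [ha|ha] := eqVneq (sqn a) 0.
  rewrite /dotp big1 ?mulr_ge0 ?enorm_ge0 // => i _.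
  by rewrite (sqn_eq0 _ ha) mul0r.
have [hb|hb] := eqVneq (sqn b) 0.
  rewrite /dotp big1 ?mulr_ge0 ?enorm_ge0 // => i _.
  by rewrite (sqn_eq0 _ hb) mulr0.
have pa : 0 < enorm a.
  by rewrite lt_neqAle enorm_ge0 andbT eq_sym enormE sqrtr_eq0 -ltNge lt_neqAle eq_sym ha sqn_ge0.
have pb : 0 < enorm b.
  by rewrite lt_neqAle enorm_ge0 andbT eq_sym enormE sqrtr_eq0 -ltNge lt_neqAle eq_sym hb sqn_ge0.
have := @dot_t a b (enorm b / enorm a) (divr_gt0 pb pa).
rewrite -!enorm_sqr.
have -> : enorm b / enorm a * enorm a ^+ 2 + (enorm b / enorm a)^-1 * enorm b ^+ 2
   = 2 * (enorm a * enorm b).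
  by field; rewrite ?gt_eqF.  
by rewrite ler_pM2l.
Qed.

Lemma sqnD a b : sqn (a + b) = sqn a + 2 * dotp a b + sqn b.
Proof.
rewrite /sqn /dotp mulr_sumr -!big_split /=; apply: eq_bigr => i _.
by rewrite mxE; ring.
Qed.

Lemma enormD a b : enorm (a + b) <= enorm a + enorm b.
Proof.
rewrite enormE -(@ger0_norm _ (enorm a + enorm b)); last by rewrite addr_ge0 ?enorm_ge0.
rewrite -sqrtr_sqr ler_sqrt; last exact: sqr_ge0.
rewrite sqnD sqrrD !enorm_sqr.
have := CS a b; lra.
Qed.

Lemma enormZ c a : enorm (c *: a) = `|c| * enorm a.
Proof.
rewrite !enormE /sqn.
have -> : \sum_(i < d) (c *: a) ord0 i ^+ 2 = c ^+ 2 * \sum_(i < d) a ord0 i ^+ 2.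
  by rewrite mulr_sumr; apply: eq_bigr => i _; rewrite mxE exprMn.
by rewrite sqrtrM ?sqr_ge0 // sqrtr_sqr.
Qed.

Lemma enormN a : enorm (- a) = enorm a.
Proof. by rewrite -scaleN1r enormZ normrN normr1 mul1r. Qed.

End Alg.

Section Per.
Context {R : realType} {d : nat}.

Lemma pder_periodic (f : 'rV[R]_d -> R) i : zperiodic f -> zperiodic (pder i f).
Proof.
move=> hf x k hk; rewrite /pder /derive /=.
have -> : (fun h : R => h^-1 *: (f (h *: ev i + (x + k)) - f (x + k))) =
  (fun h : R => h^-1 *: (f (h *: ev i + x) - f x)).
  by apply/funext => h; rewrite addrA !(hf _ k hk).
by [].
Qed.

Lemma periodic_bounded (g : 'rV[R]_d -> R) : continuous g -> zperiodic g ->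
  exists M, forall x, `|g x| <= M.
Proof.
move=> cg hg.
pose K := [set v : 'rV[R]_d | forall i, `[(0:R), 1]%classic (v ord0 i)].
have cK : compact K := @rV_compact R d (fun _ => `[(0:R), 1]%classic) (fun _ => @segment_compact R 0 1).
have := compact_bounded (continuous_compact (continuous_subspaceT cg) cK).
move=> [M [_ HM]].
exists (M + 1) => x.
pose k : 'rV[R]_d := \row_i ((Num.floor (x ord0 i))%:~R).
have hk : int_vec k by move=> i; rewrite mxE; exact: intr_int.
have -> : x = (x - k) + k by rewrite subrK.
rewrite hg //.
have : [set g x | x in K] (g (x - k)).
  exists (x - k) => //= i; rewrite !mxE /= in_itv /=.
  have /andP[h1 h2] := floor_itv (x ord0 i).
  rewrite subr_ge0 h1 /= lerBlDl.
  by move: h2; rewrite intrD => /ltW; rewrite addrC.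
have hM1 : M < M + 1 by rewrite ltrDl ltr01.
by move/(HM (M + 1) hM1).
Qed.

Lemma pder_cont (f : 'rV[R]_d -> R) i : C21 f -> continuous (pder i f).
Proof.
by move=> [_ [hd _]] x; apply: differentiable_continuous.
Qed.

End Per.

Section Meas.
Context {R : realType} {d : nat}.

Lemma cont_meas (g : 'rV[R]_d -> R) : continuous g ->
  measurable_fun [set: d.-tuple R] (fun y => g (tup2rv y)).
Proof.
move=> cg.
apply: (measurability _ (measurable_realfun.RGenOpens.measurableE R)).
move=> _ [_ [a [b ->]] <-].
rewrite setTI.
set P := (fun y => g (tup2rv y)) @^-1` _.
pose box (u : {ffun 'I_d -> rat * rat}) : set (d.-tuple R) :=
  \bigcap_(i in [set: 'I_d]) [set y | ratr (u i).1 < tnth y i < ratr (u i).2].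
have mbox u : measurable (box u).
  apply: fin_bigcap_measurable; first exact: finite_finset.
  move=> i _.
  have := @measurable_tnth _ R d i measurableT `](ratr (u i).1), (ratr (u i).2)[%classic (measurable_itv _).
  rewrite setTI.
  congr measurable; apply/seteqP; split => y /=; by rewrite in_itv.
pose F u := if pselect (box u `<=` P) then box u else set0.
have -> : P = \bigcup_u F u.
  apply/seteqP; split; last first.
    by move=> y [u _]; rewrite /F; case: pselect => [sub|_] // /sub.
  move=> y Py.
  have Oo : open ((g @^-1` `]a, b[%classic) : set 'rV[R]_d).
    by apply: open_comp; [move=> z _; exact: cg | exact: interval_open].
  have : nbhs (tup2rv y) (g @^-1` `]a, b[%classic) by apply: open_nbhs_nbhs; split.
  move=> /nbhs_ballP [e e0 He].
  have : forall i, exists p : rat * rat,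
      (tnth y i - e < ratr p.1 < tnth y i) /\ (tnth y i < ratr p.2 < tnth y i + e).
    move=> i.
    have h1 : tnth y i - e < tnth y i by rewrite ltrBlDr ltrDl.
    have h2 : tnth y i < tnth y i + e by rewrite ltrDl.
    have [q1 hq1] := rat_in_itvoo h1.
    have [q2 hq2] := rat_in_itvoo h2.
    by exists (q1, q2); move: hq1 hq2; rewrite !in_itv /=.
  move=> /boolp.choice [fp hfp].
  pose u := [ffun i => fp i].
  have byu : box u y.
    move=> i _ /=; rewrite ffunE.
    have [/andP[h1 h2] /andP[h3 h4]] := hfp i.
    by rewrite h2 h3.
  exists u => //; rewrite /F; case: pselect => [_ //|nsub].
  exfalso; apply: nsub => w bw.
  have : ball (tup2rv y) e (tup2rv w).
    rewrite -ball_normE /ball_ /=.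
    have -> : `|tup2rv y - tup2rv w| = mx_norm (tup2rv y - tup2rv w) by [].
    rewrite mx_normrE; apply: bigmax_lt => //= -[i j] _ /=.
    rewrite (ord1 i) !mxE.
    have [/andP[h1 h2] /andP[h3 h4]] := hfp j.
    have /andP[h5 h6] := bw j I.
    move: h5 h6; rewrite /u ffunE => h5 h6.
    rewrite ltr_norml; apply/andP; split; lra.
  move=> hb; exact: (He _ hb).
apply: countable_bigcupT_measurable; first exact: countableP.
move=> u; rewrite /F; case: (pselect (box u `<=` P)) => _ /=; [exact: mbox | exact: measurable0].
Qed.
End Meas.

Section Bounds.
Context {R : realType} {d : nat}.

Lemma coord_le_enorm (a : 'rV[R]_d) i : `|a ord0 i| <= enorm a.
Proof.
rewrite enormE -sqrtr_sqr ler_wsqrtr // /sqn (bigD1 i) //= lerDl.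
by apply: sumr_ge0 => j _; exact: sqr_ge0.
Qed.

Lemma grad_ub (f : 'rV[R]_d -> R) : C21 f -> zperiodic f ->
  has_ubound (range (fun x => enorm (grad f x))).
Proof.
move=> hf hp.
have : forall i, exists M, forall x, `|pder i f x| <= M.
  move=> i; apply: periodic_bounded; first exact: pder_cont.
  exact: pder_periodic.
move=> /boolp.choice [M hM].
exists (Num.sqrt (\sum_(i < d) M i ^+ 2)) => _ [x _ <-].
rewrite enormE ler_wsqrtr // /sqn; apply: ler_sum => i _.
rewrite mxE; have := hM i x; rewrite ler_norml => /andP[h1 h2].
have h0 : 0 <= M i by apply: le_trans (hM i x).
nra.
Qed.

Lemma supnorm_ub (f : 'rV[R]_d -> R) x : C21 f -> zperiodic f ->
  enorm (grad f x) <= supnorm (grad f).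
Proof. by move=> hf hp; apply: ub_le_sup; [exact: grad_ub | exists x]. Qed.

Lemma supnorm_ge0 (f : 'rV[R]_d -> R) : C21 f -> zperiodic f ->
  0 <= supnorm (grad f).
Proof. by move=> hf hp; apply: le_trans (enorm_ge0 _) (supnorm_ub f 0 hf hp). Qed.

Lemma conv_bound (W : 'rV[R]_d -> R) (hW : C21 W) (hWp : zperiodic W)
  (mu : probability (d.-tuple R) R) x :
  enorm (conv_grad W mu x) <= supnorm (grad W).
Proof.
set S := supnorm (grad W).
set c := conv_grad W mu x.
pose f i y := pder i W (x - tup2rv y).
have cz : continuous (fun z : 'rV[R]_d => x - z).
  move=> z; apply: (@continuousB _ _ _ (fun=> x) id).
  - exact: cst_continuous.
  - exact: cvg_id.
have mf i : measurable_fun setT (f i).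
  apply: (@cont_meas R d (fun z => pder i W (x - z))).
  move=> z; apply: continuous_comp; first exact: cz.
  exact: pder_cont.
have bf i y : `|f i y| <= S.
  apply: le_trans (supnorm_ub W (x - tup2rv y) hW hWp).
  by have := coord_le_enorm (grad W (x - tup2rv y)) i; rewrite mxE.
have S0 : 0 <= S by exact: supnorm_ge0.
have mufin : (mu setT < +oo)%E by rewrite probability_setT ltry.
have inf i : mu.-integrable setT (EFin \o f i).
  apply: measurable_bounded_integrable => //.
  exists S; split; first exact: num_real.
  by move=> M hM y _ /=; apply: le_trans (bf i y) (ltW hM).
have ci i : (c ord0 i)%:E = (\int[mu]_y (f i y)%:E)%E.
  rewrite /c /conv_grad mxE /Rintegral fineK //; exact: (integrable_fin_num measurableT (inf i)).
have key : ((sqn c)%:E <= (enorm c * S)%:E)%E.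
  have -> : (sqn c)%:E = (\sum_(i < d) (c ord0 i)%:E * (\int[mu]_y (f i y)%:E))%E.
    rewrite /sqn -sumEFin; apply: eq_bigr => i _.
    by rewrite -ci -EFinM expr2.
  under eq_bigr => i _ do rewrite -(integralZl measurableT (inf i)).
  rewrite -integral_sum //; last by move=> i; apply: integrableZl.
  apply: le_trans (_ : (\int[mu]_y (enorm c * S)%:E <= _)%E); last first.
    rewrite integral_cst //; set m := (X in (_ * X <= _)%E); have -> : m = 1%E by exact: probability_setT.
    by rewrite mule1.
  apply: le_integral => //.
  - by apply: integrable_sum => // i _; apply: integrableZl.
  - exact: finite_measure_integrable_cst.
  move=> y _.
  rewrite sumEFin lee_fin.
  rewrite (_ : \sum_i c ord0 i * f i y = dotp c (grad W (x - tup2rv y))); last first.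
    by rewrite /dotp; apply: eq_bigr => i _; rewrite [grad _ _ _ _]mxE.
  apply: le_trans (CS _ _) _.
  by apply: ler_wpM2l; [exact: enorm_ge0 | exact: supnorm_ub].
move: key; rewrite lee_fin -enorm_sqr expr2.
have [->|cn0] := eqVneq (enorm c) 0; first by [].
have cp : 0 < enorm c by rewrite lt_neqAle eq_sym cn0 enorm_ge0.
by rewrite ler_pM2l.
Qed.

End Bounds.

Section Path.
Context {R : realType} {d : nat}.

Lemma leb_itv_fin (t h : R) : 0 < h ->
  (lebesgue_measure (`[t%R, (t + h)%R]%classic : set R) < +oo)%E.
Proof.
move=> hh; rewrite lebesgue_measure_itv /= lte_fin ltrDl hh -EFinD.
exact: ltry.
Qed.

Lemma int_cst (t h c : R) : 0 < h ->
  (@lebesgue_measure R).-integrable `[t, t + h] (fun _ => c%:E).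
Proof.
move=> hh.
apply: (@measurable_bounded_integrable _ _ _ _ (cst c)) => //.
- exact: leb_itv_fin.
- exists `|c|; split; first exact: num_real.
  by move=> M hM y _ /=; apply: ltW.
Qed.

Lemma path_bound (V W : 'rV[R]_d -> R)
  (hV : C21 V) (hVp : zperiodic V) (hW : C21 W) (hWp : zperiodic W)
  (rho : R -> probability (d.-tuple R) R)
  (x y : 'rV[R]_d) (t h : R) (hh : 0 < h) (k : 'rV[R]_d) (hk : int_vec k) :
  let B := supnorm (grad V) + supnorm (grad W) in
  (cost V W rho x y t h <=
     ((enorm (x - y - k) / (2 * Num.sqrt h) + 2^-1 * Num.sqrt h * B) ^+ 2)%:E)%E.
Proof.
cbv zeta; set B := supnorm (grad V) + supnorm (grad W).
pose v := y + k - x.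
have ev : enorm (x - y - k) = enorm v.
  rewrite -enormN; congr enorm; apply/rowP => j; rewrite !mxE; ring.
pose g := fun _ : R => h^-1 *: v.
pose gamma := fun s : R => x + ((s - t) / h) *: v.
have B0 : 0 <= B by rewrite addr_ge0 //; exact: supnorm_ge0.
pose C := 4^-1 * (h^-1 * enorm v + B) ^+ 2.
have mD : measurable (`[t, t + h]%classic : set R) by exact: measurable_itv.
apply: le_trans (_ : ((\int[@lebesgue_measure R]_(s in `[t, (t + h)%R])
               (lagr V W rho (g s) (gamma s) s)%:E)%E <= _)%E).
  apply: ereal_inf_lbound; exists gamma, g; split => //.
  - move=> i; split; [|split].
    + exact: int_cst.
    + exact: (@int_cst t h ((h^-1 *: v) ord0 i ^+ 2) hh).
    + move=> s /andP[ts _].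
      rewrite (_ : (\int[lebesgue_measure]_(r in `[t, s]) g r ord0 i) = (h^-1 *: v) ord0 i * (s - t)).
        rewrite /gamma !mxE; ring.
      rewrite Rintegral_cst //.
      congr (_ * _).
      have := @lebesgue_measure_itv R `[t, s]; rewrite /= => ->.
      rewrite lte_fin; have [ts'|nts] := eqVneq t s.
        by rewrite ts' ltxx subrr.
      have lts : t < s by rewrite lt_neqAle nts ts.
      by rewrite lts.
  - by rewrite /gamma subrr mul0r scale0r addr0.
  - rewrite /gamma (_ : t + h - t = h) ?mulfV ?gt_eqF //; last by ring.
    rewrite (_ : x + 1 *: v - y = k) //; apply/rowP => j; rewrite !mxE; ring.
have pw : forall s, lagr V W rho (g s) (gamma s) s <= C.
  move=> s; rewrite /lagr /C; apply: ler_wpM2l; first by rewrite invr_ge0.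
  have e1 : enorm (g s + grad V (gamma s) + conv_grad W (rho s) (gamma s))
      <= h^-1 * enorm v + B.
    apply: le_trans (enormD _ _) _.
    apply: le_trans (lerD (enormD _ _) (lexx _)) _.
    rewrite /g enormZ ger0_norm; last by rewrite invr_ge0 ltW.
    rewrite /B -addrA lerD2l lerD //.
      exact: supnorm_ub.
    exact: conv_bound.
  have e0 := enorm_ge0 (g s + grad V (gamma s) + conv_grad W (rho s) (gamma s)).
  by rewrite !expr2; apply: ler_pM.
have lagr0 : forall s, 0 <= lagr V W rho (g s) (gamma s) s.
  by move=> s; rewrite /lagr mulr_ge0 ?invr_ge0 // sqr_ge0.
have H1 : (\int[@lebesgue_measure R]_(s in `[t, (t + h)%R])
               (lagr V W rho (g s) (gamma s) s)%:E <=
           \int[@lebesgue_measure R]_(s in `[t, (t + h)%R]) (cst C%:E) s)%E.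
  have C0 : 0 <= C := le_trans (lagr0 t) (pw t).
  rewrite !ge0_integralE //; try (by move=> s _ /=; rewrite lee_fin).
  apply: ereal_sup_le => _ [f hf <-]; exists f => //= z; apply: le_trans (hf z) _.
  rewrite /patch; case: ifP => _ //; rewrite lee_fin; exact: pw.
apply: le_trans H1 _.
rewrite integral_cst //.
have := @lebesgue_measure_itv R `[t, t + h]; rewrite /= => ->.
rewrite lte_fin ltrDl hh -EFinB -EFinM lee_fin.
rewrite ev (_ : t + h - t = h); last by ring.
rewrite /C.
set s := Num.sqrt h.
have s0 : 0 < s by rewrite sqrtr_gt0.
have hs : h = s ^+ 2 by rewrite sqr_sqrtr // ltW.
rewrite hs le_eqVlt; apply/orP; left; apply/eqP.
by field; rewrite gt_eqF.
Qed.

End Path.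

Theorem mainTheorem9 (R : realType) (d : nat) (V W : 'rV[R]_d -> R)
  (hV : C21 V) (hVp : zperiodic V) (hW : C21 W) (hWp : zperiodic W)
  (rho : R -> probability (d.-tuple R) R)
  (x y : 'rV[R]_d) (t h : R) (ht : 0 < t) (hh : 0 < h) :
  let B := supnorm (grad V) + supnorm (grad W) in
  (cost V W rho x y t h <=
     ((torus_dist x y / (2 * Num.sqrt h) + 2^-1 * Num.sqrt h * B) ^+ 2)%:E)%E.
Proof.
cbv zeta; set B := supnorm (grad V) + supnorm (grad W).
have B0 : 0 <= B by rewrite addr_ge0 //; exact: supnorm_ge0.
have s0 : 0 < Num.sqrt h by rewrite sqrtr_gt0.
set s := Num.sqrt h in s0 *.
set D := torus_dist x y.
set E := [set enorm (x - y - k) | k in [set k : 'rV[R]_d | int_vec k]].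
have Ene : E !=set0.
  exists (enorm (x - y - 0)); exists 0 => //.
  by move=> i; rewrite mxE; exact: rpred0.
have Elb : lbound E 0 by move=> _ [k _ <-]; exact: enorm_ge0.
have D0 : 0 <= D := lb_le_inf Ene Elb.
have hr : forall r, D < r ->
    (cost V W rho x y t h <= ((r / (2 * s) + 2^-1 * s * B) ^+ 2)%:E)%E.
  move=> r Dr.
  have rD : 0 < r - D by rewrite subr_gt0.
  have [e [k hk <-] he] := @inf_adherent _ E (r - D) rD (conj Ene (ex_intro _ 0 Elb)).
  have Hp := path_bound V W hV hVp hW hWp rho x y t h hh k hk.
  cbv zeta in Hp.
  apply: le_trans Hp _.
  rewrite lee_fin.
  have e0 := enorm_ge0 (x - y - k).
  have a0 : 0 <= enorm (x - y - k) / (2 * s) + 2^-1 * s * B.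
    by rewrite addr_ge0 // ?mulr_ge0 // ?invr_ge0 // ?mulr_ge0 // ltW.
  have ab : enorm (x - y - k) / (2 * s) + 2^-1 * s * B <= r / (2 * s) + 2^-1 * s * B.
    rewrite lerD2r ler_pM2r ?invr_gt0 ?mulr_gt0 //.
    have ED : inf E = D by [].
    rewrite ED in he; apply: ltW; lra.
  by rewrite !expr2; apply: ler_pM.
move: hr; case: (cost V W rho x y t h) => [c0| |] H.
- rewrite lee_fin.
  have [c0n|c0p] := ltP c0 0.
    by apply: le_trans (ltW c0n) _; exact: sqr_ge0.
  have Hs : forall r, D < r -> Num.sqrt c0 <= r / (2 * s) + 2^-1 * s * B.
    move=> r Dr; have := H r Dr; rewrite lee_fin => Hc.
    have L0 : 0 <= r / (2 * s) + 2^-1 * s * B.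
      by rewrite addr_ge0 // ?mulr_ge0 // ?invr_ge0 // ?mulr_ge0 // ltW // (le_lt_trans D0 Dr).
    by rewrite -(ger0_norm L0) -sqrtr_sqr ler_wsqrtr.
  have Hd : Num.sqrt c0 - 2^-1 * s * B <= D / (2 * s).
    apply/ler_addgt0Pr => e e0.
    have Dr : D < D + 2 * s * e by rewrite ltrDl !mulr_gt0.
    have := Hs _ Dr.
    rewrite (_ : (D + 2 * s * e) / (2 * s) = D / (2 * s) + e); last by field; rewrite gt_eqF.
    lra.
  have sq0 := sqrtr_ge0 c0.
  rewrite -(sqr_sqrtr c0p) !expr2; apply: ler_pM => //; lra.
- have := H (D + 1); rewrite ltrDl ltr01 => /(_ isT).
  by [].
- by rewrite leNye.
Qed.
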